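(* Let $X$ be a $T_1$ topological space. Then $T''(X)$ is a (Von Neumann) regular ring if and only if for each $Z\in Z''[X]$ there exists a dense cozero set $U$ in $X$ such that $Z\cap U$ is clopen in the subspace $U$.
   Context: $C(X)$ is the ring of real-valued continuous functions on $X$; a cozero set is a set $\{x: h(x)\neq 0\}$ with $h\in C(X)$. $T''(X)$ is the ring (under pointwise operations) of all functions $f\colon X\to\mathbb{R}$ for which there is a dense cozero set $U$ of $X$ with $f|_U$ continuous. For $f\colon X\to \mathbb{R}$, $Z(f)=\{x: f(x)=0\}$, and $Z''[X]=\{Z(f): f\in T''(X)\}$. A commutative ring $R$ is regular if for each $a\in R$ there is $x\in R$ with $a=a^2x$. *)

(* Defs.v *)
From HB Require Import structures.
From mathcomp Require Import all_boot all_order all_algebra.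
From mathcomp Require Import all_classical all_reals all_analysis.
Set Implicit Arguments. Unset Strict Implicit. Unset Printing Implicit Defensive.
Import Order.TTheory GRing.Theory Num.Theory.
Import numFieldNormedType.Exports.
Local Open Scope classical_set_scope.
Local Open Scope ring_scope.

Definition cozero_set (R : realType) (X : topologicalType) (U : set X) : Prop :=
  exists h : X -> R, continuous h /\ U = [set x | h x != 0].

Definition Tpp (R : realType) (X : topologicalType) (f : X -> R) : Prop :=
  exists U : set X, cozero_set R U /\ dense U /\ {within U, continuous f}.

Definition Tpp_regular (R : realType) (X : topologicalType) : Prop :=
  forall a : X -> R, Tpp a ->
    exists b : X -> R, Tpp b /\ a = (fun x => a x * a x * b x).

Definition zero_set (R : realType) (X : Type) (f : X -> R) : set X :=
  [set x | f x = 0].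

Definition Zpp (R : realType) (X : topologicalType) (Z : set X) : Prop :=
  exists f : X -> R, Tpp f /\ Z = zero_set f.

Definition clopen_in (X : topologicalType) (U A : set X) : Prop :=
  A `<=` U /\
  (exists O : set X, open O /\ A = O `&` U) /\
  (exists C : set X, closed C /\ A = C `&` U).

(* Main.v *)
Require Import Defs.
From HB Require Import structures.
From mathcomp Require Import all_boot all_order all_algebra.
From mathcomp Require Import all_classical all_reals all_analysis.
Local Open Scope classical_set_scope.
Local Open Scope ring_scope.
Import Order.TTheory GRing.Theory Num.Theory.
Import numFieldNormedType.Exports.
Set Implicit Arguments. Unset Strict Implicit.

Lemma cozero_open (R : realType) (X : topologicalType) (U : set X) :
  cozero_set R U -> open U.
Proof.
move=> [h [ch ->]].
have -> : [set x | h x != 0] = h @^-1` [set y : R | y != 0] by [].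
apply: open_comp; last exact: open_neq.
by move=> x _; apply: ch.
Qed.

Lemma cozeroI (R : realType) (X : topologicalType) (U V : set X) :
  cozero_set R U -> cozero_set R V -> cozero_set R (U `&` V).
Proof.
move=> [h [ch ->]] [k [ck ->]]; exists (h \* k); split.
  by move=> x; exact: (continuousM (ch x) (ck x)).
apply: funext => x; apply: propext; rewrite /= mulf_eq0 negb_or.
by split => [[a b]|/andP//]; apply/andP.
Qed.

Lemma Tpp_in (R : realType) (X : topologicalType) (f : X -> R) : Tpp f ->
  exists U, cozero_set R U /\ dense U /\ open U /\ {in U, continuous f}.
Proof.
move=> [U [cU [dU cf]]]; have oU := cozero_open cU.
by exists U; rewrite -continuous_open_subspace.
Qed.

Theorem theorem3p1 (R : realType) (X : topologicalType) :
  accessible_space X ->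
  (Tpp_regular R X <->
   (forall Z : set X, Zpp R Z ->
      exists U : set X, cozero_set R U /\ dense U /\ clopen_in U (Z `&` U))).
Proof.
move=> _; split.
- move=> reg Z [f [Tf ->]].
  have [b [Tb fE]] := reg f Tf.
  have [U1 [cU1 [dU1 [oU1 cf]]]] := Tpp_in Tf.
  have [U2 [cU2 [dU2 [oU2 cb]]]] := Tpp_in Tb.
  have oU : open (U1 `&` U2) by apply: openI.
  have ch : {in U1 `&` U2, continuous (f \* b)}.
    move=> x /set_mem [x1 x2]; apply: continuousM;
      [apply: cf | apply: cb]; exact: mem_set.
  have key : forall x, f x != 0 -> f x * b x = 1.
    move=> x fx0; apply: (mulfI fx0).
    have /= e := congr1 (fun g => g x) fE.
    by rewrite mulr1 mulrA -e.
  have fb0 : forall x, f x = 0 -> f x * b x = 0 by move=> x ->; rewrite mul0r.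
  exists (U1 `&` U2); split; first exact: cozeroI.
  split; first exact: denseI.
  split; first by move=> x [].
  split.
  + exists ((U1 `&` U2) `&` (f \* b) @^-1` [set y | y != 1]); split.
      apply: (proj1 (continuous_inP _ oU) ch); exact: open_neq.
    apply/seteqP; split=> x.
      move=> [zx ux]; split => //; split => //=.
      by rewrite /zero_set /= in zx; rewrite fb0 // eq_sym oner_eq0.
    move=> [[ux /= h1] _]; split => //; rewrite /zero_set /=.
    case: (eqVneq (f x) 0) => // /key e.
    by rewrite e eqxx in h1.
  + exists (~` ((U1 `&` U2) `&` (f \* b) @^-1` [set y | y != 0])); split.
      apply: open_closedC; apply: (proj1 (continuous_inP _ oU) ch); exact: open_neq.
    apply/seteqP; split => x.
      move=> [zx ux]; split => //; move=> [_ /=].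
      by rewrite /zero_set /= in zx; rewrite fb0 ?eqxx.
    move=> [nx ux]; split => //; rewrite /zero_set/=.
    case: (eqVneq (f x) 0) => // /key e; exfalso; apply: nx; split => //=.
    by rewrite e oner_eq0.
- move=> H a Ta.
  have [U [cU [dU [_ [[Op [oO ZO]] _]]]]] :=
    H (zero_set a) (ex_intro _ a (conj Ta erefl)).
  have [V [cV [dV [oV ca]]]] := Tpp_in Ta.
  have oU := cozero_open cU.
  exists (fun x => (a x)^-1); split; last first.
    apply: funext => x; case: (eqVneq (a x) 0) => [->|ax0]; first by rewrite !mul0r.
    by rewrite mulfK.
  exists (U `&` V); split; first exact: cozeroI.
  split; first exact: denseI.
  rewrite continuous_open_subspace; last exact: openI.
  move=> x /set_mem [Ux Vx].
  case: (eqVneq (a x) 0) => [ax0|ax0]; last first.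
    apply: continuousV => //; apply: ca; exact: mem_set.
  have nOU : nbhs x (Op `&` U).
    apply: open_nbhs_nbhs; split; first exact: openI.
    by rewrite -ZO.
  rewrite /continuous_at ax0 invr0.
  apply: cvg_trans (cvg_cst (0:R)).
  apply: near_eq_cvg.
  apply: filterS nOU => y; rewrite -ZO => -[zy _] /=.
  by rewrite /zero_set/= in zy; rewrite zy invr0.
exact: nbhs_filter.
Qed.
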